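(* Let $\mathcal M$ be a time-dependent finite-horizon MDP accessed through the quantum oracle $O_{\mathcal{QM}}$, and let $\delta\in(0,1)$. Run the algorithm QVI-1 described in the context. Then, with probability at least $1-\delta$, its outputs satisfy $\hat V_0=V_0^*$ and $\hat\pi$ is an optimal policy, i.e. $V_0^{\hat\pi}=V_0^*$.
   Context: Write $[H]=\{0,\dots,H-1\}$. The MDP $\mathcal M=(\mathcal S,\mathcal A,\{P_h\}_{h\in[H]},\{r_h\}_{h\in[H]},H)$ has finite state space $\mathcal S$ with $S=|\mathcal S|$, finite action space $\mathcal A$ with $A=|\mathcal A|$, rewards $r_h(s,a)\in[0,1]$, and transition distributions $P_h(\cdot\mid s,a)$. Write $P_{h|s,a}\in\mathbb R^{\mathcal S}$ for the vector $(P_h(s'\mid s,a))_{s'}$. A policy is a map $\pi:\mathcal S\times[H]\to\mathcal A$. Its value function is $V_h^\pi(s)=\mathbb E[\sum_{t=h}^{H-1}r_t(s_t,a_t)\mid s_h=s]$, with $a_t=\pi(s_t,t)$ and $s_{t+1}\sim P_t(\cdot\mid s_t,a_t)$. The optimal value is $V_h^*=\max_\pi V_h^\pi$, and $\pi$ is optimal if $V_0^\pi=V_0^*$. Real numbers are stored in fixed-point binary with enough qubits that no overflow occurs; $\overline{x}$ denotes the stored binary representation of $x$. For a vector $f\in\mathbb R^N$, a binary oracle is a unitary $|i\rangle|0\rangle\mapsto|i\rangle|\overline{f(i)}\rangle$. The quantum oracle of $\mathcal M$ is the unitary $O_{\mathcal{QM}}:|s\rangle|a\rangle|h\rangle|s'\rangle|0\rangle|0\rangle\mapsto|s\rangle|a\rangle|h\rangle|s'\rangle|\overline{r_h(s,a)}\rangle|\overline{P_h(s'\mid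 s,a)}\rangle$. QMS (quantum maximum searching) is a subroutine with the following guarantee: given a binary oracle for $f\in\mathbb R^N$ and a parameter $\zeta>0$, it outputs an index $i$ with $f(i)=\max_j f(j)$ with probability at least $1-\zeta$, using at most $\tilde c\sqrt N\log(1/\zeta)$ queries to the oracle, where $\tilde c>0$ is a constant. Algorithm QVI-1$(\mathcal M,\delta)$: - Set $\zeta=\delta/(SH)$ and $\hat V_H=\mathbf 0$. - For $h=H-1,\dots,0$: - Build a binary oracle for the classical vector $\hat V_{h+1}$. - For each $s\in\mathcal S$, build (using $O_{\mathcal{QM}}$ and that oracle) a binary oracle for the vector $\hat Q_{h,s}\in\mathbb R^{\mathcal A}$, where $\hat Q_{h,s}(a)=r_h(s,a)+P_{h|s,a}^{\mathrm T}\hat V_{h+1}$. - For each $s$, set $\hat\pi(s,h)$ to the output of QMS with failure parameter $\zeta$ on $\{\hat Q_{h,s}(a):a\in\mathcal A\}$. - For each $s$, set $\hat V_h(s)=\hat Q_{h,s}(\hat\pi(s,h))$. - Return $\hat\pi$ and $\hat V_0$. *)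

(* Defs.v *)
From mathcomp Require Import all_boot all_order all_algebra.
Set Implicit Arguments. Unset Strict Implicit. Unset Printing Implicit Defensive.
Import Order.TTheory GRing.Theory Num.Theory.
Local Open Scope ring_scope.

Section MDP.
Variables (R : realFieldType) (S A : finType) (H : nat).
(* r h s a = r_h(s,a);  P h s a s' = P_h(s' | s, a) *)
Variables (r : 'I_H -> S -> A -> R) (P : 'I_H -> S -> A -> S -> R).

(* A (deterministic, time-dependent) policy pi(s,h) : pi h s. *)
Definition policy := {ffun 'I_H -> {ffun S -> A}}.

Definition Qval (h : 'I_H) (V : S -> R) (s : S) (a : A) : R :=
  r h s a + \sum_(s' : S) P h s a s' * V s'.

(* V_h^pi (with V_H^pi = 0): backward unrolling of the expectation,
   applying the step for time H-1 innermost, ..., time h outermost. *)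
Definition Vpi (pi : policy) (h : nat) : S -> R :=
  foldr (fun (i : 'I_H) (V : S -> R) (s : S) => Qval i V s (pi i s))
        (fun _ => 0) [seq i <- enum 'I_H | (h <= nat_of_ord i)%N].

Definition Vstar (h : nat) (s : S) : R :=
  \big[Num.max/0]_(pi : policy) Vpi pi h s.

(* ---- Algorithm QVI-1 ----
   c h s is the output of the QMS call for (h, s), i.e. c = hat pi. *)
Definition Vhat (c : policy) (h : nat) : S -> R :=
  foldr (fun (i : 'I_H) (Vnext : S -> R) (s : S) =>
           (* hat Q_{i,s}(a) = Qval i Vnext s a ; hat V_i(s) = hat Q_{i,s}(hat pi(s,i)) *)
           Qval i Vnext s (c i s))
        (fun _ => 0) [seq i <- enum 'I_H | (h <= nat_of_ord i)%N].

Definition Qhat (c : policy) (h : 'I_H) (s : S) : A -> R :=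
  Qval h (Vhat c h.+1) s.

(* qms f z a = probability that QMS, run on the vector f with failure
   parameter z, outputs index a. *)
Definition is_argmax (f : A -> R) (a : A) : bool := [forall b, f b <= f a].

Definition QMS_spec (qms : (A -> R) -> R -> A -> R) : Prop :=
  forall (f : A -> R) (z : R),
    (forall a, 0 <= qms f z a) /\ \sum_(a : A) qms f z a = 1 /\
    (0 < z -> 1 - z <= \sum_(a : A | is_argmax f a) qms f z a).

(* Probability that the QMS outputs of QVI-1 are exactly c: each call is an
   independent run of QMS on the vector built from the (already computed)
   hat V_{h+1}. *)
Definition QVI1_prob (qms : (A -> R) -> R -> A -> R) (zeta : R) (c : policy) : R :=
  \prod_(h : 'I_H) \prod_(s : S) qms (Qhat c h s) zeta (c h s).

Definition QVI1_zeta (delta : R) : R := delta / (#|S|%:R * H%:R).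

Definition QVI1_success (c : policy) : bool :=
  [forall s, (Vhat c 0 s == Vstar 0 s) && (Vpi c 0 s == Vstar 0 s)].

End MDP.

(* Main.v *)
Require Import Defs.
From mathcomp Require Import all_boot all_order all_algebra.
From mathcomp Require Import lra.
From Stdlib Require Import FunctionalExtensionality.
Import Order.TTheory GRing.Theory Num.Theory.
Local Open Scope ring_scope.
Notation funext := functional_extensionality.

Lemma filter_enum_ord (H m : nat) :
  map val [seq i <- enum 'I_H | (m <= nat_of_ord i)%N] = iota m (H - m).
Proof.
rewrite -filter_map val_enum_ord.
case: (leqP m H) => hm.
  rewrite -{1}(subnKC hm) iotaD filter_cat add0n.
  rewrite (@eq_in_filter _ _ pred0); last first.
    by move=> x; rewrite mem_iota add0n => /andP[_ h]; rewrite /= leqNgt h.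
  rewrite filter_pred0 /= (@eq_in_filter _ _ predT) ?filter_predT //.
  by move=> x; rewrite mem_iota => /andP[-> _].
rewrite (_ : H - m = 0)%N; last by apply/eqP; rewrite subn_eq0 ltnW.
rewrite (@eq_in_filter _ _ pred0) ?filter_pred0 //.
by move=> x; rewrite mem_iota add0n => /andP[_ h]; rewrite /= leqNgt (ltn_trans h hm).
Qed.

Lemma filter_step (H : nat) (k : 'I_H) :
  [seq i <- enum 'I_H | (k <= nat_of_ord i)%N] =
  k :: [seq i <- enum 'I_H | (k.+1 <= nat_of_ord i)%N].
Proof.
apply: (inj_map val_inj); rewrite /= !filter_enum_ord.
have hk := ltn_ord k.
by rewrite -(subnSK hk).
Qed.

Lemma filter_end (H m : nat) : (H <= m)%N ->
  [seq i <- enum 'I_H | (m <= nat_of_ord i)%N] = [::].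
Proof.
move=> hm; apply: (inj_map val_inj); rewrite filter_enum_ord /=.
by rewrite (_ : H - m = 0)%N //; apply/eqP; rewrite subn_eq0.
Qed.

Lemma down_ind (H : nat) (Pr : nat -> Prop) :
  (forall h, (H <= h)%N -> Pr h) ->
  (forall k : 'I_H, Pr k.+1 -> Pr k) -> forall h, Pr h.
Proof.
move=> hend hstep h.
move: {2}(H - h)%N (leqnn (H - h)%N) => n; elim: n h => [|n IH] h hn.
  by apply: hend; rewrite -subn_eq0 -leqn0.
case: (leqP H h) => hh; first exact: hend.
apply: (hstep (Ordinal hh)); apply: IH; rewrite /=.
by rewrite subnS -ltnS prednK ?subn_gt0.
Qed.
Section M.
Variables (R : realFieldType) (S A : finType) (H : nat).
Variables (r : 'I_H -> S -> A -> R) (P : 'I_H -> S -> A -> S -> R).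

Lemma Vpi_step (pi : policy S A H) (k : 'I_H) s :
  Vpi r P pi k s = Qval r P k (Vpi r P pi k.+1) s (pi k s).
Proof. by rewrite /Vpi filter_step. Qed.

Lemma Vpi_end (pi : policy S A H) h s : (H <= h)%N -> Vpi r P pi h s = 0.
Proof. by move=> hh; rewrite /Vpi filter_end. Qed.

Lemma Vpi_dep (c c' : policy S A H) h :
  (forall i : 'I_H, (h <= i)%N -> c i = c' i) -> Vpi r P c h =1 Vpi r P c' h.
Proof.
elim/(@down_ind H): h.
  by move=> h hh _ s; rewrite !Vpi_end.
move=> k IH hc s; rewrite !Vpi_step hc //.
rewrite /Qval; congr (_ + _); apply: eq_bigr => s' _; rewrite IH //.
by move=> i hi; apply: hc; apply: ltnW.
Qed.

Hypothesis r0 : forall h s a, 0 <= r h s a.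
Hypothesis P0 : forall h s a s', 0 <= P h s a s'.

Lemma Vpi_ge0 (pi : policy S A H) h s : 0 <= Vpi r P pi h s.
Proof.
elim/(@down_ind H): h s.
  by move=> h hh s; rewrite Vpi_end.
move=> k IH s; rewrite Vpi_step /Qval addr_ge0 //.
by apply: sumr_ge0 => s' _; apply: mulr_ge0.
Qed.

Lemma greedy_opt (c : policy S A H) :
  (forall (k : 'I_H) s, is_argmax (Qhat r P c k s) (c k s)) ->
  forall (pi : policy S A H) h s, Vpi r P pi h s <= Vpi r P c h s.
Proof.
move=> hg pi; elim/(@down_ind H).
  by move=> h hh s; rewrite !Vpi_end.
move=> k IH s; rewrite !Vpi_step.
apply: (@le_trans _ _ (Qval r P k (Vpi r P c k.+1) s (pi k s))).
  rewrite /Qval lerD2l; apply: ler_sum => s' _; apply: ler_wpM2l => //.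
have := hg k s; rewrite /is_argmax => /forallP /(_ (pi k s)).
by rewrite /Qhat.
Qed.

Lemma greedy_success (c : policy S A H) :
  (forall (k : 'I_H) s, is_argmax (Qhat r P c k s) (c k s)) ->
  QVI1_success r P c.
Proof.
move=> hg; apply/forallP => s.
have E : Vpi r P c 0 s = Vstar r P 0 s.
  apply/eqP; rewrite eq_le; apply/andP; split.
    rewrite /Vstar; exact: (le_bigmax _ (fun pi => Vpi r P pi 0 s) c).
  rewrite /Vstar; by apply: bigmax_le => [|pi _]; [apply: Vpi_ge0 | apply: greedy_opt].
by rewrite -E /Vhat /Vpi eqxx.
Qed.

End M.
Section Chain.
Local Set Implicit Arguments. Local Unset Strict Implicit.
Local Open Scope ring_scope.

Definition upd (X : finType) (n : nat) (c : {ffun 'I_n -> X}) (k : 'I_n) (x : X) :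
  {ffun 'I_n -> X} := [ffun j => if j == k then x else c j].

Definition agree (X : finType) (n m : nat) (c c' : {ffun 'I_n -> X}) : bool :=
  [forall j : 'I_n, (m <= j)%N ==> (c' j == c j)].

Lemma chain_bound (R : realFieldType) (X : finType) (n : nat)
  (w : 'I_n -> {ffun 'I_n -> X} -> R) (g : 'I_n -> {ffun 'I_n -> X} -> bool) (p : R)
  (c0 : {ffun 'I_n -> X}) :
  0 <= p -> (forall k c, 0 <= w k c) ->
  (forall (k : 'I_n) (c c' : {ffun 'I_n -> X}), (forall j : 'I_n, (k <= j)%N -> c j = c' j) ->
     w k c = w k c' /\ g k c = g k c') ->
  (forall (k : 'I_n) (c : {ffun 'I_n -> X}), p <= \sum_(x | g k (upd c k x)) w k (upd c k x)) ->
  p ^+ n <= \sum_(c | [forall k, g k c]) \prod_k w k c.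
Proof.
move=> p0 w0 dep hstep.
suff: forall m, (m <= n)%N -> forall c,
  p ^+ m <= \sum_(c' | agree m c c' && [forall k : 'I_n, (k < m)%N ==> g k c'])
              \prod_(k : 'I_n | (k < m)%N) w k c'.
  move=> /(_ n (leqnn n) c0); congr (_ <= _); apply: eq_big.
    move=> c'; have -> : agree n c0 c' by apply/forallP => j; rewrite leqNgt ltn_ord.
    by apply: eq_forallb => k; rewrite ltn_ord.
  by move=> c' _; apply: eq_bigl => k; rewrite ltn_ord.
elim=> [|m IH] hm c.
  rewrite expr0 (eq_bigl (fun c' => c' == c)).
    by rewrite big_pred1_eq big_pred0.
  move=> c'; rewrite (_ : [forall k : 'I_n, _] = true) ?andbT; last first.
    by apply/forallP => k.
  apply/forallP/eqP => [h|->].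
    by apply/ffunP => j; apply/eqP; apply: h.
  by move=> j; apply/implyP.
have hmn : (m < n)%N by [].
set km := Ordinal hmn.
rewrite (@partition_big _ _ _ _ _ X _ (fun c' : {ffun 'I_n -> X} => c' km) predT) //=.
have inner : forall x,
  \sum_(c' | (agree m.+1 c c' && [forall k : 'I_n, (k < m.+1)%N ==> g k c']) && (c' km == x))
     \prod_(k : 'I_n | (k < m.+1)%N) w k c' =
  if g km (upd c km x) then w km (upd c km x) *
    \sum_(c' | agree m (upd c km x) c' && [forall k : 'I_n, (k < m)%N ==> g k c'])
              \prod_(k : 'I_n | (k < m)%N) w k c'
  else 0.
  move=> x.
  have agr : forall c', agree m (upd c km x) c' ->
      forall j : 'I_n, (km <= j)%N -> upd c km x j = c' j.
    by move=> c' /forallP ha j hj; apply/esym/eqP; move: (ha j); rewrite hj.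
  have E : forall c', ((agree m.+1 c c' && [forall k : 'I_n, (k < m.+1)%N ==> g k c'])
        && (c' km == x)) =
      ((agree m (upd c km x) c' && [forall k : 'I_n, (k < m)%N ==> g k c'])
        && g km (upd c km x)).
    move=> c'; apply/idP/idP.
      case/andP => /andP[/forallP ha /forallP hg] /eqP hx.
      have ag : agree m (upd c km x) c'.
        apply/forallP => j; apply/implyP => hj; rewrite ffunE.
        have [->|hne] := eqVneq j km; first by rewrite hx.
        have : (m < j)%N.
          by rewrite ltn_neqAle hj andbT; apply/eqP => e; move/eqP: hne; apply; apply: val_inj.
        by move=> hj'; move: (ha j); rewrite hj'.
      rewrite ag /=; apply/andP; split.
        apply/forallP => k; apply/implyP => hk; move: (hg k).
        by rewrite (ltnW (m:=k.+1)) ?ltnS //.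
      rewrite (proj2 (dep km _ _ (agr c' ag))).
      by move: (hg km); rewrite /= ltnSn.
    case/andP => /andP[ag /forallP hg] hgk.
    have hc := agr c' ag.
    have hx : c' km = x by rewrite -hc // ffunE eqxx.
    rewrite hx eqxx andbT; apply/andP; split.
      apply/forallP => j; apply/implyP => hj.
      rewrite -hc ?ffunE; last by apply: ltnW.
      have [e|_] := eqVneq j km; last by [].
      by move: hj; rewrite e /= ltnn.
    apply/forallP => k; apply/implyP; rewrite ltnS leq_eqVlt => /orP[/eqP e|hk].
      have -> : k = km by apply: val_inj.
      by rewrite -(proj2 (dep km _ _ hc)).
    by move: (hg k); rewrite hk.
  rewrite (eq_bigl _ _ E).
  case: ifP => hgk; last by rewrite big_pred0 // => c'; rewrite andbF.
  rewrite big_distrr /=; apply: eq_big => c'; first by rewrite andbT.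
  case/andP => /andP[ag _] _.
  rewrite (bigD1 km) //=; congr (_ * _).
    by rewrite (proj1 (dep km _ _ (agr c' ag))).
  apply: eq_bigl => k; rewrite ltnS [RHS]ltn_neqAle andbC; congr andb.
rewrite (eq_bigr _ (fun x _ => inner x)) {inner}.
apply: (@le_trans _ _ (\sum_(x : X) if g km (upd c km x) then w km (upd c km x) * p ^+ m else 0)).
  rewrite -big_mkcond /= -big_distrl /= exprSr.
  by rewrite mulrC; apply: (ler_wpM2r (exprn_ge0 m p0)); apply: hstep.
apply: ler_sum => x _; case: ifP => // _.
by apply: (ler_wpM2l (w0 _ _)); apply: IH; apply: ltnW.
Qed.
End Chain.

Lemma bern (R : realFieldType) (z : R) n : 0 <= z <= 1 -> 1 - n%:R * z <= (1-z)^+n.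
Proof.
case/andP=> z0 z1; elim: n => [|n IH]; first by rewrite mul0r subr0 expr0.
rewrite exprSr.
have h1 : (1 - n%:R * z) * (1 - z) <= (1-z)^+n * (1 - z).
  by apply: ler_wpM2r => //; rewrite subr_ge0.
apply: le_trans h1; rewrite -natr1.
have : 0 <= n%:R * z * z :> R by rewrite mulr_ge0 // mulr_ge0.
lra.
Qed.

Lemma Qhat_dep (R : realFieldType) (S A : finType) (H : nat)
  (r : 'I_H -> S -> A -> R) (P : 'I_H -> S -> A -> S -> R)
  (c c' : policy S A H) (k : 'I_H) :
  (forall j : 'I_H, (k < j)%N -> c j = c' j) ->
  forall s a, Qhat r P c k s a = Qhat r P c' k s a.
Proof.
move=> hc s a; rewrite /Qhat /Qval; congr (_ + _); apply: eq_bigr => s' _.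
congr (_ * _); exact: (@Vpi_dep _ _ _ _ r P _ _ k.+1 hc).
Qed.

Theorem theorem3p5 (R : realFieldType) (S A : finType) (H : nat)
  (r : 'I_H -> S -> A -> R) (P : 'I_H -> S -> A -> S -> R)
  (qms : (A -> R) -> R -> A -> R) (delta : R) :
  (forall h s a, 0 <= r h s a <= 1) ->
  (forall h s a s', 0 <= P h s a s') ->
  (forall h s a, \sum_(s' : S) P h s a s' = 1) ->
  QMS_spec qms ->
  0 < delta < 1 ->
  1 - delta <=
    \sum_(c : policy S A H | QVI1_success r P c)
       QVI1_prob r P qms (QVI1_zeta S H delta) c.
Proof.
move=> hr hP _ hq /andP[d0 d1].
have r0 : forall h s a, 0 <= r h s a by move=> h s a; case/andP: (hr h s a).
set z := QVI1_zeta S H delta.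
have [a0 _] : exists a : A, true.
  case: (pickP A) => [a _|h]; first by exists a.
  have := proj1 (proj2 (hq (fun _ => 0) 0)); rewrite big_pred0 // => e.
  by move: (@oner_neq0 R); rewrite -e eqxx.
set N := (#|S| * H)%N.
have z0 : 0 <= z by rewrite /z /QVI1_zeta; apply: divr_ge0; [exact: ltW | rewrite -natrM; exact: ler0n].
have zle : z <= delta.
  rewrite /z /QVI1_zeta; case: (posnP N) => hN.
    by rewrite -natrM -/N hN invr0 mulr0 ltW.
  rewrite -natrM -/N ler_pdivrMr ?ltr0n //.
  by rewrite ler_peMr ?ler1n // ltW.
have z1 : z <= 1 by rewrite (le_trans zle) // ltW.
have zpos : (0 < #|S|)%N -> (0 < H)%N -> 0 < z.
  move=> hS hH; rewrite /z /QVI1_zeta divr_gt0 // mulr_gt0 // ltr0n //.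
set p := (1 - z) ^+ #|S|.
have p0 : 0 <= p by rewrite exprn_ge0 // subr_ge0.
set w := fun (k : 'I_H) (c : policy S A H) =>
  \prod_(s : S) qms (Qhat r P c k s) z (c k s).
set g := fun (k : 'I_H) (c : policy S A H) =>
  [forall s, is_argmax (Qhat r P c k s) (c k s)].
have w0 : forall k c, 0 <= w k c.
  by move=> k c; apply: prodr_ge0 => s _; case: (hq (Qhat r P c k s) z).
have dep : forall (k : 'I_H) (c c' : policy S A H),
    (forall j : 'I_H, (k <= j)%N -> c j = c' j) -> w k c = w k c' /\ g k c = g k c'.
  move=> k c c' hc.
  have hq' := @Qhat_dep _ _ _ _ r P c c' k (fun j (hj : (k < j)%N) => hc j (ltnW hj)).
  have hk := hc k (leqnn k).
  have hQ : forall s, Qhat r P c k s = Qhat r P c' k s.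
    by move=> s; apply: funext => a; apply: hq'.
  split; first by apply: eq_bigr => s _; rewrite hk hQ.
  by rewrite /g hk; apply: eq_forallb => s; rewrite hQ.
have hstep : forall (k : 'I_H) (c : policy S A H),
    p <= \sum_(x | g k (upd c k x)) w k (upd c k x).
  move=> k c.
  have hu : forall x s, Qhat r P (upd c k x) k s = Qhat r P c k s.
    move=> x s; apply: funext => a; apply: (@Qhat_dep _ _ _ _ r P) => j hj.
    by rewrite ffunE; case: eqP => // e; move: hj; rewrite e ltnn.
  have huk : forall x, upd c k x k = x by move=> x; rewrite ffunE eqxx.
  rewrite (eq_big (fun x => x \in family (fun s => [pred a | is_argmax (Qhat r P c k s) a]))
     (fun x => \prod_s qms (Qhat r P c k s) z (x s))); first last.
  - by move=> x _; apply: eq_bigr => s _; rewrite hu huk.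
  - by move=> x; rewrite /g inE huk; apply: eq_forallb => s; rewrite hu.
  apply: (@le_trans _ _ (\prod_(s : S) \sum_(a | is_argmax (Qhat r P c k s) a) qms (Qhat r P c k s) z a)); last first.
    rewrite (bigA_distr_big_dep (fun s a => is_argmax (Qhat r P c k s) a) (fun s a => qms (Qhat r P c k s) z a)); exact: lexx.
  rewrite /p -prodr_const (eq_bigl predT) //.
  apply: ler_prod => s _; rewrite subr_ge0 z1 /=.
  have hS : (0 < #|S|)%N by apply/card_gt0P; exists s.
  have [_ [_ hb]] := hq (Qhat r P c k s) z.
  exact: hb (zpos hS (leq_ltn_trans (leq0n k) (ltn_ord k))).
  have ch := @chain_bound R {ffun S -> A} H w g p [ffun _ => [ffun _ => a0]] p0 w0 dep hstep.
apply: (@le_trans _ _ (p ^+ H)).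
  rewrite /p -exprM -/N.
  case: (posnP N) => hN; first by rewrite hN expr0 lerBlDr lerDl ltW.
  apply: le_trans (@bern R z N _); last by rewrite z0 z1.
  rewrite /z /QVI1_zeta -natrM -/N mulrC divfK ?lexx //.
  by rewrite pnatr_eq0 -lt0n.
apply: (le_trans ch).
rewrite [X in X <= _]big_mkcond [X in _ <= X]big_mkcond /=.
apply: ler_sum => c _; case: ifP => hG.
  rewrite greedy_success //.
  by move=> k s; move/forallP: hG => /(_ k) /forallP /(_ s).
case: ifP => _ //.
by apply: prodr_ge0 => k _; apply: w0.
Qed.
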